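(* For every finite directed acyclic graph $G=(N,E)$, the Geometric Mechanism satisfies $\frac{\sum_{i\in N}x_i(G)\,p_i}{p^*}\ge \frac12$, where $p^*=\max_{i\in N}p_i$. That is, the Geometric Mechanism has approximation ratio $1/2$ on the family of DAGs.
   Context: In a DAG $G=(N,E)$ with $N=\{1,\dots,n\}$, $P_i$ is the set of nodes having a directed path to $i$ (with $i\in P_i$), and $p_i=|P_i|$. Write $p_i\succ p_j$ if $p_i>p_j$, or $p_i=p_j$ and $i<j$. For a node $i$, let $G^{(i)}$ be the graph obtained from $G$ by deleting all out-edges of $i$. Node $i$ is influential if, with progeny measured in $G^{(i)}$, $p_i\succ p_j$ for all $j\ne i$. The influential set $\{s_1,\dots,s_m\}$ is the set of influential nodes, indexed so that $p_{s_1}\succ\cdots\succ p_{s_m}$, with progeny measured in $G$. The Geometric Mechanism selects $s_j$ with probability $x_{s_j}(G)=1/2^{m-j+1}$ for $j=1,\dots,m$, and selects every other node with probability $0$. *)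

(* Defs.v *)
(* Nodes N = {1,...,n} are represented by 'I_n (node k+1 <-> ordinal k);
   the tie-breaking order i < j on node labels is the nat order on ordinals. *)
From mathcomp Require Import all_boot all_order all_algebra.
Set Implicit Arguments. Unset Strict Implicit. Unset Printing Implicit Defensive.
Import Order.TTheory GRing.Theory Num.Theory.

Definition acyclic (n : nat) (e : rel 'I_n) : Prop :=
  forall u v : 'I_n, e u v -> ~~ connect e v u.

Definition progeny (n : nat) (e : rel 'I_n) (i : 'I_n) : nat :=
  #|[set j : 'I_n | connect e j i]|.

Definition succ_p (n : nat) (e : rel 'I_n) (i j : 'I_n) : bool :=
  (progeny e j < progeny e i)%N || ((progeny e i == progeny e j) && (i < j)%N).

Definition del_out (n : nat) (e : rel 'I_n) (i : 'I_n) : rel 'I_n :=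
  fun u v => e u v && (u != i).

Definition influential (n : nat) (e : rel 'I_n) (i : 'I_n) : bool :=
  [forall j : 'I_n, (j != i) ==> succ_p (del_out e i) i j].

Definition num_infl (n : nat) (e : rel 'I_n) : nat := #|[set i | influential e i]|.

(* position j (1-based) of an influential node in the order p_{s_1} \succ ... \succ p_{s_m},
   progeny measured in G *)
Definition infl_rank (n : nat) (e : rel 'I_n) (i : 'I_n) : nat :=
  (#|[set k | influential e k && succ_p e k i]|).+1.

Definition geom_mech (n : nat) (e : rel 'I_n) (i : 'I_n) : rat :=
  if influential e i then ((2%:R ^+ (num_infl e - infl_rank e i).+1)^-1)%R else 0%R.

Definition max_progeny (n : nat) (e : rel 'I_n) : nat := \max_(i : 'I_n) progeny e i.

(* Main.v *)
Require Import Defs.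
From mathcomp Require Import all_boot all_order all_algebra.
From mathcomp Require Import zify ring lra.
Import Order.TTheory GRing.Theory Num.Theory.

Section G.
Variables (n : nat) (e : rel 'I_n).

Lemma conn_del_sub (i u v : 'I_n) : connect (del_out e i) u v -> connect e u v.
Proof. apply: connect_sub => x y /andP[H _]; exact: connect1. Qed.

Lemma conn_path_split (j k : 'I_n) (p : seq 'I_n) (u : 'I_n) :
  path e u p -> last u p = k -> connect (del_out e j) u k \/ connect e u j.
Proof.
elim: p u => [|y p IH] u /=; first by move=> _ ->; left.
case/andP=> Huy Hp Hl.
case: (IH y Hp Hl) => [H|H].
  case: (eqVneq u j) => [->|Hne]; first by right.
  left; apply: connect_trans H; apply: connect1; by rewrite /del_out Huy Hne.
right; apply: connect_trans H; exact: connect1.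
Qed.

Lemma conn_split (j u k : 'I_n) : connect e u k -> connect (del_out e j) u k \/ connect e u j.
Proof. by case/connectP=> p Hp Hl; apply: (@conn_path_split j k p u Hp); rewrite Hl. Qed.

Lemma conn_self (i u : 'I_n) : connect e u i -> connect (del_out e i) u i.
Proof.
case/connectP=> p; elim: p u => [|y p IH] u /=; first by move=> _ ->.
case/andP=> Huy Hp Hl.
have H := IH y Hp Hl.
case: (eqVneq u i) => [->|Hne]; first exact: connect0.
apply: connect_trans H; apply: connect1; by rewrite /del_out Huy Hne.
Qed.

Lemma prog_del_le (i k : 'I_n) : (progeny (del_out e i) k <= progeny e k)%N.
Proof.
apply: subset_leq_card; apply/subsetP=> x; rewrite !inE; exact: conn_del_sub.
Qed.

Lemma prog_del_self (i : 'I_n) : progeny (del_out e i) i = progeny e i.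
Proof.
apply/eqP; rewrite eqn_leq prog_del_le /=.
apply: subset_leq_card; apply/subsetP=> x; rewrite !inE; exact: conn_self.
Qed.

Lemma prog_split (j k : 'I_n) : (progeny e k <= progeny (del_out e j) k + progeny e j)%N.
Proof.
rewrite /progeny.
apply: (leq_trans _ (_ : #|[set x | connect (del_out e j) x k] :|: [set x | connect e x j]| <= _)%N).
  apply: subset_leq_card; apply/subsetP=> x; rewrite !inE => H.
  by case: (conn_split j x k H) => ->; rewrite ?orbT.
by rewrite cardsU leq_subr.
Qed.

Definition key (e' : rel 'I_n) (i : 'I_n) : nat := progeny e' i * n + (n - i).

Lemma succE (e' : rel 'I_n) (k i : 'I_n) : succ_p e' k i = (key e' i < key e' k)%N.
Proof.
rewrite /succ_p /key.
have Hi := ltn_ord i; have Hk := ltn_ord k.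
case: (ltngtP (progeny e' i) (progeny e' k)) => H /=.
- symmetry; apply/idP. nia.
- symmetry; apply/negP. nia.
- rewrite H. lia.
Qed.

Lemma succ_total (e' : rel 'I_n) (k i : 'I_n) : k != i -> succ_p e' k i || succ_p e' i k.
Proof.
rewrite /succ_p => Hne.
have : (val k != val i) by [].
case: (ltngtP (progeny e' i) (progeny e' k)) => H /=; rewrite ?H ?eqxx /=; try lia.
Qed.

Lemma succ_irr (e' : rel 'I_n) (i : 'I_n) : succ_p e' i i = false.
Proof. by rewrite succE ltnn. Qed.

Lemma succ_trans (e' : rel 'I_n) (i j k : 'I_n) : succ_p e' i j -> succ_p e' j k -> succ_p e' i k.
Proof. rewrite !succE => H1 H2; exact: ltn_trans H2 H1. Qed.

Lemma top_ex : (0 < n)%N -> exists t : 'I_n, forall j, j != t -> succ_p e t j.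
Proof.
move=> Hn; pose i0 : 'I_n := Ordinal Hn.
exists [arg max_(i > i0) key e i].
case: arg_maxnP => // t _ Ht j Hjt.
case/orP: (succ_total e j t Hjt) => // H.
by move: (Ht j isT); rewrite /= leqNgt -succE H.
Qed.

Lemma top_infl (t : 'I_n) : (forall j, j != t -> succ_p e t j) -> influential e t.
Proof.
move=> Ht; apply/forallP=> j; apply/implyP=> Hj.
have Hle := prog_del_le t j; move: (Ht j Hj); rewrite /succ_p prog_del_self.
case/orP => [H|/andP[/eqP H Hlt]]; first by rewrite (leq_ltn_trans Hle H).
case: (ltngtP (progeny (del_out e t) j) (progeny e t)) => H2 //=; first lia.
Qed.

Lemma top_max (t : 'I_n) : (forall j, j != t -> succ_p e t j) -> forall j, (progeny e j <= progeny e t)%N.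
Proof.
move=> Ht j; case: (eqVneq j t) => [->//|Hj].
move: (Ht j Hj); rewrite /succ_p; case/orP; first exact: ltnW.
by case/andP=> /eqP -> _.
Qed.

Lemma infl_half (t i : 'I_n) : influential e i -> (progeny e t <= 2 * progeny e i)%N.
Proof.
move=> Hi; case: (eqVneq t i) => [->|Hti]; first lia.
move/forallP: Hi => /(_ t); rewrite Hti /= /succ_p.
have H1 := prog_split i t; have H2 := prog_del_self i; have H3 := prog_del_le i i.
case/orP; [|case/andP=> /eqP H4 _]; lia.
Qed.

Definition cnt (i : 'I_n) : nat := #|[set k | influential e k && succ_p e k i]|.

Lemma cnt_lt (i j : 'I_n) : influential e j -> succ_p e j i -> (cnt j < cnt i)%N.
Proof.
move=> Hj Hji; apply: proper_card; apply/properP; split.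
  apply/subsetP=> x; rewrite !inE => /andP[-> Hx] /=; exact: succ_trans e x j i Hx Hji.
by exists j; rewrite !inE ?Hj ?Hji ?succ_irr.
Qed.

Lemma cnt_ltm (i : 'I_n) : influential e i -> (cnt i < #|[set k | influential e k]|)%N.
Proof.
move=> Hi; apply: proper_card; apply/properP; split.
  by apply/subsetP=> x; rewrite !inE => /andP[-> _].
by exists i; rewrite !inE ?Hi ?succ_irr.
Qed.

Lemma cnt_inj : {in [set k | influential e k] &, injective cnt}.
Proof.
move=> i j; rewrite !inE => Hi Hj Hc; apply/eqP; apply/negPn/negP => Hne.
case/orP: (succ_total e i j Hne) => H.
- by have := cnt_lt j i Hi H; rewrite Hc ltnn.
- by have := cnt_lt i j Hj H; rewrite Hc ltnn.
Qed.

End G.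
Arguments cnt {n} e i.
Arguments top_ex {n e}.
Arguments top_infl {n e t}.
Arguments top_max {n e t}.
Arguments infl_half {n e} t {i}.
Arguments cnt_ltm {n e i}.
Arguments cnt_inj {n e}.
Arguments succ_irr {n} e' i.
Arguments succE {n} e' k i.
Lemma cardlt n m : (m <= n)%N -> #|[set j : 'I_n | (j < m)%N]| = m.
Proof.
move=> H; rewrite -sum1_card.
transitivity (\sum_(j < n | (j < m)%N) 1)%N; first by apply: eq_bigl => j; rewrite inE.
by rewrite -(big_ord_widen n (fun _ => 1%N)) // sum1_card card_ord.
Qed.
Local Open Scope ring_scope.
Lemma geo (m : nat) : \sum_(j < m) ((2%:R : rat) ^+ j.+1)^-1 = 1 - (2%:R ^+ m)^-1.
Proof.
elim: m => [|m IH]; first by rewrite big_ord0 expr0 invr1 subrr.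
rewrite big_ord_recr /= IH exprS.
have H : (2%:R : rat) ^+ m != 0 by rewrite expf_neq0.
field. by rewrite H.
Qed.

Theorem theorem2 (n : nat) (e : rel 'I_n) :
  (0 < n)%N -> acyclic e ->
  (\sum_(i : 'I_n) geom_mech e i * (progeny e i)%:R) / (max_progeny e)%:R >= 1 / 2.
Proof.
move=> Hn _.
have [t Ht] := @top_ex n e Hn.
have Htinf := top_infl Ht.
set m := #|[set k | influential e k]|.
have Hmax : max_progeny e = progeny e t.
  apply/eqP; rewrite eqn_leq leq_bigmax andbT; apply/bigmax_leqP => j _; exact: top_max.
have Hpt : (0 < progeny e t)%N.
  by apply/card_gt0P; exists t; rewrite inE connect0.
have Hct : cnt e t = 0%N.
  apply/eqP; rewrite cards_eq0; apply/eqP/setP => k; rewrite !inE.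
  case: (eqVneq k t) => [->|Hk]; first by rewrite succ_irr andbF.
  have := Ht k Hk; rewrite !succE => H.
  by apply/negbTE/nandP; right; rewrite -leqNgt ltnW.
have Hm : (0 < m)%N by have := cnt_ltm Htinf; rewrite Hct.
pose x i : rat := ((2%:R ^+ (m - (cnt e i).+1).+1)^-1).
have -> : \sum_i geom_mech e i * (progeny e i)%:R = \sum_(i | influential e i) x i * (progeny e i)%:R.
  rewrite (bigID (fun i => influential e i)) /= [X in _ + X]big1 ?addr0; last first.
    by move=> i /negbTE Hi; rewrite /geom_mech Hi mul0r.
  by apply: eq_bigr => i Hi; rewrite /geom_mech Hi.
have HmN : (m <= n)%N by rewrite -[X in (_ <= X)%N]card_ord max_card.
pose f (i : 'I_n) : 'I_n := insubd t (m - (cnt e i).+1)%N.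
have Hf i : influential e i -> val (f i) = (m - (cnt e i).+1)%N.
  move=> Hi; rewrite val_insubd; have := cnt_ltm Hi; case: ifP => //; lia.
pose S := [set k | influential e k].
have Hfinj : {in S &, injective f}.
  move=> i j Hi Hj /(congr1 val) Hv; apply: (@cnt_inj n e) => //.
  have Hi' : influential e i by move: Hi; rewrite inE.
  have Hj' : influential e j by move: Hj; rewrite inE.
  move: Hv; rewrite !Hf //; have := cnt_ltm Hi'; have := cnt_ltm Hj'; rewrite -/m; lia.
have Himg : f @: S = [set j : 'I_n | (j < m)%N].
  apply/setP/subset_cardP.
    by rewrite card_in_imset // cardlt.
  apply/subsetP => j /imsetP[i Hi ->]; rewrite inE Hf; last by move: Hi; rewrite inE.
  by have := cnt_ltm (e:=e) (i:=i); lia.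
have Hsumx : \sum_(i | influential e i) x i = 1 - (2%:R ^+ m)^-1.
  rewrite -geo (big_ord_widen n (fun j => ((2%:R : rat) ^+ j.+1)^-1)) //.
  transitivity (\sum_(j in f @: S) ((2%:R : rat) ^+ (val j).+1)^-1); last first.
    by rewrite Himg; apply: eq_bigl => j; rewrite inE.
  rewrite big_imset //=; apply: eq_big => [i|i Hi]; first by rewrite inE.
  by rewrite Hf.
have Hxt : x t = (2%:R ^+ m)^-1.
  by rewrite /x Hct subn1 prednK.
have Hx0 i : 0 <= x i by rewrite invr_ge0 exprn_ge0.
set P := (progeny e t)%:R : rat.
have HP : 0 < P by rewrite ltr0n.
have HA : \sum_(i | influential e i && (i != t)) x i * (P / 2) <=
          \sum_(i | influential e i && (i != t)) x i * (progeny e i)%:R.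
  apply: ler_sum => i /andP[Hi _]; apply: ler_wpM2l => //.
  have := infl_half t Hi; rewrite -(ler_nat rat) natrM /P => H.
  rewrite ler_pdivrMr //; lra.
rewrite -mulr_suml in HA.
move: Hsumx; rewrite (bigD1 t) //= => Hsumx.
rewrite Hmax -/P (bigD1 t) //= ler_pdivlMr //.
set X := \sum_(i | _ && _) x i in HA Hsumx.
set A := \sum_(i | _ && _) _ in HA *.
have HX : X = 1 - (2%:R ^+ m)^-1 - x t by rewrite -Hsumx; ring.
rewrite HX Hxt in HA; rewrite Hxt.
set y := (2%:R ^+ m)^-1 in HA *.
nra.
Qed.
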